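(* Let $P=(p_1,\dots,p_n)$ be points in $\mathbb{R}^d$, $\mathcal{F}$ a constraint for $k$-CMedian, and $\mathcal{C}=\{c_1,\dots,c_k\}\subset\mathbb{R}^d$ with $\omega=\frac1n\sum_{i=1}^n\min_{c\in\mathcal{C}}\|p_i-c\|$. For each $i$ let $\tilde p_i$ be a point of $\mathcal{C}$ nearest to $p_i$, and $\tilde P=(\tilde p_1,\dots,\tilde p_n)$. If $\mu_{opt}$ and $\tilde\mu_{opt}$ denote the optimal $k$-CMedian values of $P$ and $\tilde P$ (same $\mathcal{F}$), then $\tilde\mu_{opt}\le\omega+\mu_{opt}$.
   Context: A constraint for $k$-CMedian is a nonempty family $\mathcal{F}$ of ordered partitions $(S_1,\dots,S_k)$ of $\{1,\dots,n\}$ into $k$ parts. For a sequence $X=(x_1,\dots,x_n)$ its optimal $k$-CMedian value is $\min_{(S_j)\in\mathcal{F}}\min_{c'_1,\dots,c'_k\in\mathbb{R}^d}\frac1n\sum_j\sum_{i\in S_j}\|x_i-c'_j\|$. *)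

(* Defs.v *)
From HB Require Import structures.
From mathcomp Require Import all_boot all_order all_algebra.
From mathcomp Require Import boolp classical_sets reals.
Set Implicit Arguments. Unset Strict Implicit. Unset Printing Implicit Defensive.
Import Order.TTheory GRing.Theory Num.Theory.
Local Open Scope ring_scope.

Definition enorm (R : realType) (d : nat) (v : 'rV[R]_d) : R :=
  Num.sqrt (\sum_(j < d) (v ord0 j) ^+ 2).

(* An ordered partition (S_1,...,S_k) of {1..n} is encoded by its labelling
   function sigma : 'I_n -> 'I_k  (S_j = sigma^{-1}(j)).
   A constraint is a nonempty family F of such labellings. *)

Definition ccost (R : realType) (d n k : nat) (X : 'I_n -> 'rV[R]_d)
  (sigma : {ffun 'I_n -> 'I_k}) (c' : 'I_k -> 'rV[R]_d) : R :=
  n%:R^-1 * \sum_(i < n) enorm (X i - c' (sigma i)).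

Definition cmedian_opt (R : realType) (d n k : nat)
  (F : {set {ffun 'I_n -> 'I_k}}) (X : 'I_n -> 'rV[R]_d) : R :=
  reals.inf [set r : R | exists sigma c',
      sigma \in F /\ r = ccost X sigma c']%classic.

Definition dist_to (R : realType) (d k : nat) (c : 'I_k -> 'rV[R]_d)
  (x : 'rV[R]_d) : R :=
  reals.inf [set r : R | exists j, r = enorm (x - c j)]%classic.

(* Main.v *)
Require Import Defs.
From HB Require Import structures.
From mathcomp Require Import all_boot all_order all_algebra.
From mathcomp Require Import boolp classical_sets reals.
From mathcomp Require Import ring lra.
Import Order.TTheory GRing.Theory Num.Theory.
Local Open Scope ring_scope.

Lemma cs_sum (R : realType) (d : nat) (a b : 'I_d -> R) :
  (\sum_i a i * b i) ^+ 2 <= (\sum_i a i ^+ 2) * (\sum_i b i ^+ 2).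
Proof.
set A := \sum_i a i ^+ 2; set B := \sum_i b i ^+ 2; set C := \sum_i a i * b i.
have B0 : 0 <= B by apply: sumr_ge0 => i _; exact: sqr_ge0.
have key : 0 <= B * (A * B - C ^+ 2).
  have -> : B * (A * B - C ^+ 2) = \sum_i (B * a i - C * b i) ^+ 2.
    transitivity (\sum_i (B ^+ 2 * a i ^+ 2 - (2 * B * C) * (a i * b i) + C ^+ 2 * b i ^+ 2)).
      rewrite big_split /= sumrB -!mulr_sumr -/A -/B -/C; ring.
    by apply: eq_bigr => i _; ring.
  by apply: sumr_ge0 => i _; exact: sqr_ge0.
case: (ltrgt0P B) => [Bp|Bn|B00].
- have : 0 <= A * B - C ^+ 2 by rewrite -(pmulr_rge0 _ Bp).
  rewrite subr_ge0; lra.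
- lra.
- have bz : forall i, b i = 0.
    move=> i; apply/eqP; rewrite -sqrf_eq0; apply/eqP.
    move/eqP: B00; rewrite psumr_eq0 => [/allP H|j _]; last exact: sqr_ge0.
    by apply/eqP; apply: H; rewrite mem_index_enum.
  have -> : C = 0 by rewrite /C big1 // => i _; rewrite bz mulr0.
  by rewrite B00 expr0n /= mulr0.
Qed.

Lemma enorm_ge0 (R : realType) (d : nat) (v : 'rV[R]_d) : 0 <= enorm v.
Proof. exact: sqrtr_ge0. Qed.

Lemma enormN (R : realType) (d : nat) (v : 'rV[R]_d) : enorm (- v) = enorm v.
Proof. by rewrite /enorm; congr Num.sqrt; apply: eq_bigr => j _; rewrite mxE sqrrN. Qed.

Lemma enormD (R : realType) (d : nat) (u v : 'rV[R]_d) :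
  enorm (u + v) <= enorm u + enorm v.
Proof.
have h0 : 0 <= enorm u + enorm v by rewrite addr_ge0 // enorm_ge0.
rewrite -(ler_pXn2r (n := 2)) ?nnegrE ?enorm_ge0 //.
set A := \sum_j u ord0 j ^+ 2; set B := \sum_j v ord0 j ^+ 2.
set C := \sum_j u ord0 j * v ord0 j.
have A0 : 0 <= A by apply: sumr_ge0 => i _; exact: sqr_ge0.
have B0 : 0 <= B by apply: sumr_ge0 => i _; exact: sqr_ge0.
have S0 : 0 <= \sum_j (u + v) ord0 j ^+ 2 by apply: sumr_ge0 => i _; exact: sqr_ge0.
rewrite /enorm sqr_sqrtr // -/A -/B sqrrD !sqr_sqrtr //.
have -> : \sum_j (u + v) ord0 j ^+ 2 = A + 2 * C + B.
  rewrite /A /B /C mulr_sumr -!big_split /=; apply: eq_bigr => j _; rewrite mxE; ring.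
have : C <= Num.sqrt A * Num.sqrt B.
  rewrite -sqrtrM //; apply: le_trans (ler_norm C) _.
  rewrite -sqrtr_sqr; rewrite ler_sqrt; last by rewrite mulr_ge0.
  exact: cs_sum.
lra.
Qed.

Lemma ccost_ge0 (R : realType) (d n k : nat) (X : 'I_n -> 'rV[R]_d)
  (sigma : {ffun 'I_n -> 'I_k}) (c' : 'I_k -> 'rV[R]_d) : 0 <= ccost X sigma c'.
Proof. by rewrite /ccost mulr_ge0 // ?invr_ge0 // sumr_ge0 // => i _; exact: enorm_ge0. Qed.

Theorem lemma12 (R : realType) (d n k : nat)
  (P : 'I_n -> 'rV[R]_d) (F : {set {ffun 'I_n -> 'I_k}})
  (c : 'I_k -> 'rV[R]_d) (Ptilde : 'I_n -> 'rV[R]_d) :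
  F != finset.set0 ->
  (forall i, exists j, Ptilde i = c j) ->
  (forall i j, enorm (P i - Ptilde i) <= enorm (P i - c j)) ->
  cmedian_opt F Ptilde <=
    n%:R^-1 * \sum_(i < n) dist_to c (P i) + cmedian_opt F P.
Proof.
move=> /set0Pn [s0 s0F] Hex Hmin.
have Hd : forall i, dist_to c (P i) = enorm (P i - Ptilde i).
  move=> i; have [j Hj] := Hex i; apply/eqP; rewrite eq_le; apply/andP; split.
    apply: (ge_inf (E := [set r : R | exists j, r = enorm (P i - c j)]%classic)).
      by exists 0 => _ [j' ->]; exact: enorm_ge0.
    by exists j; rewrite Hj.
  apply: lb_le_inf; first by exists (enorm (P i - c j)), j.
  by move=> _ [j' ->]; exact: Hmin.
set om := n%:R^-1 * \sum_(i < n) dist_to c (P i).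
rewrite -lerBlDl; apply: lb_le_inf.
  by exists (ccost P s0 (fun _ => 0)), s0, (fun _ => 0).
move=> _ [sigma [c' [sF ->]]].
rewrite lerBlDl.
apply: (@le_trans _ _ (ccost Ptilde sigma c')).
  apply: ge_inf; last by exists sigma, c'.
  by exists 0 => _ [s' [c'' [_ ->]]]; exact: ccost_ge0.
rewrite /ccost /om -mulrDr; apply: ler_wpM2l; first by rewrite invr_ge0.
rewrite -big_split /=; apply: ler_sum => i _.
rewrite Hd -(@enormN _ _ (P i - Ptilde i)) opprB.
have -> : Ptilde i - c' (sigma i) = (Ptilde i - P i) + (P i - c' (sigma i)).
  by rewrite addrA subrK.
exact: enormD.
Qed.
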